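(* The set $\mathscr U_k:=\{\underline A\in\mathcal C_k(d):\Theta_k(\underline A)>0\}$ is open and dense in $\mathcal C_k(d)$, where $\Theta_k(\underline A):=\min\{\|\wedge_k(A_aA_b)\|:1\le a,b\le m\}$ for $\underline A=(A_1,\dots,A_m)$.
   Context: Fix integers $m,d\ge1$ and $1\le k\le d$. $\mathcal C_k(d)$ is the set of tuples $\underline A=(A_1,\dots,A_m)\in{\rm Mat}(d,\mathbb R)^m$ with $\mathrm{rank}(A_j)=k$ for all $j$, with the subspace topology from ${\rm Mat}(d,\mathbb R)^m\cong\mathbb R^{md^2}$. $\wedge_kA$ is the $k$-th exterior power of a matrix $A$ (the matrix of its $k\times k$ minors). *)

(* Defs.v *)
From mathcomp Require Import all_boot all_algebra.
From mathcomp Require Import all_classical all_reals all_analysis.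
Import numFieldNormedType.Exports.
Import GRing.Theory Num.Theory.
Set Implicit Arguments. Unset Strict Implicit. Unset Printing Implicit Defensive.
Local Open Scope ring_scope.
Local Open Scope classical_set_scope.

(* An m-tuple of d x d real matrices (A_1,...,A_m) is encoded as a row vector
   of matrices A : 'rV['M[R]_d]_m, with A_j = A ord0 j.  This type carries the
   product topology, i.e. the Euclidean topology of R^(m d^2). *)
Definition mtuple (R : realType) (m d : nat) := 'rV['M[R]_d]_m.

(* Index set of the k-th exterior power: the k-subsets of {0,...,d-1}, each
   represented by its increasing enumeration f : 'I_k -> 'I_d. *)
Definition incr_index (k d : nat) (f : {ffun 'I_k -> 'I_d}) : bool :=
  [forall i : 'I_k, forall j : 'I_k, (i < j)%N ==> (f i < f j)%N].

(* k-th exterior power of A: the matrix of its k x k minors, indexed by pairs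
   (I, J) of k-subsets (row subset I, column subset J); entries at indices
   that are not increasing enumerations are set to 0. *)
Definition wedge (R : realType) (k d : nat) (A : 'M[R]_d)
  : {ffun {ffun 'I_k -> 'I_d} * {ffun 'I_k -> 'I_d} -> R} :=
  [ffun p => if incr_index p.1 && incr_index p.2
             then \det (mxsub p.1 p.2 A) else 0].

Definition wnorm (R : realType) (k d : nat)
  (w : {ffun {ffun 'I_k -> 'I_d} * {ffun 'I_k -> 'I_d} -> R}) : R :=
  \big[Num.max/0]_p `|w p|.

(* Theta_k(A) = min { || wedge_k (A_a A_b) || : a, b in {1..m} }
   (for m >= 1; the initial value of the fold is one of the listed values). *)
Definition Theta (R : realType) (m d k : nat) (A : mtuple R m d) : R :=
  let s := [seq wnorm (wedge k (A ord0 a *m A ord0 b)) | a <- enum 'I_m, b <- enum 'I_m] in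
  \big[Num.min/head 0 s]_(x <- s) x.

Definition Ck (R : realType) (m d k : nat) : set (mtuple R m d) :=
  [set A | forall j : 'I_m, \rank (A ord0 j) = k].

Definition Uk (R : realType) (m d k : nat) : set (mtuple R m d) :=
  [set A | @Ck R m d k A /\ 0 < @Theta R m d k A].

Definition rel_open (T : topologicalType) (S U : set T) : Prop :=
  exists O : set T, open O /\ U = O `&` S.

Definition rel_dense (T : topologicalType) (S U : set T) : Prop :=
  U `<=` S /\
  forall O : set T, open O -> (O `&` S !=set0) -> (O `&` U !=set0).

(* Main.v *)
Require Import Defs.
From mathcomp Require Import all_boot all_algebra.
From mathcomp Require Import all_classical all_reals all_analysis.
Import numFieldNormedType.Exports.
From mathcomp Require Import order.
Import Order.TTheory GRing.Theory Num.Theory.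
Local Open Scope ring_scope.
Local Open Scope classical_set_scope.
Section LA.
Variable F : fieldType.

Lemma rankUl n p (L : 'M[F]_n) (X : 'M[F]_(n,p)) : L \in unitmx -> \rank (L *m X) = \rank X.
Proof.
move=> uL; apply/eqP; rewrite eqn_leq mxrankM_maxr /=.
by rewrite -{1}(mulKmx uL X) mxrankM_maxr.
Qed.

Lemma LA1 n (A B : 'M[F]_n) : \rank B = \rank A ->
  exists2 W, W \in unitmx & \rank (A *m W *m B) = \rank A.
Proof.
move=> eBA.
exists (invmx (row_ebase A) *m invmx (col_ebase B)).
  by rewrite unitmx_mul !unitmx_inv !row_ebase_unit col_ebase_unit.
have hA := mulmx_ebase A; have hB := mulmx_ebase B.
have uA := row_ebase_unit A; have uB := col_ebase_unit B.
set cA := col_ebase A in hA *; set rA := row_ebase A in hA uA *.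
set cB := col_ebase B in hB uB *; set rB := row_ebase B in hB *.
rewrite -{1}hA -hB.
have -> : cA *m pid_mx (\rank A) *m rA *m (invmx rA *m invmx cB) *m
    (cB *m pid_mx (\rank B) *m rB)
  = cA *m ((pid_mx (\rank A) : 'M[F]_n) *m (pid_mx (\rank B) : 'M[F]_n)) *m rB.
  by rewrite !mulmxA (mulmxK uA) (mulmxKV uB).
rewrite eBA pid_mx_id ?rank_leq_row // mxrankMfree ?row_free_unit ?row_ebase_unit //.
by rewrite rankUl ?col_ebase_unit // rank_pid_mx // rank_leq_row.
Qed.
End LA.

Lemma enum_sorted p (S : {set 'I_p}) : sorted (relpre val ltn) (enum S).
Proof.
rewrite /enum_mem; apply: sorted_filter.
  by move=> x y z /= ; apply: ltn_trans.
by rewrite -enumT -sorted_map val_enum_ord iota_ltn_sorted.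
Qed.

Lemma sel_rows (F : fieldType) p n (M : 'M[F]_(p,n)) k : \rank M = k ->
  exists f : {ffun 'I_k -> 'I_p}, incr_index f /\ \rank (rowsub f M) = k.
Proof.
move=> <-; set r := \rank M; set mf := maxrankfun M.
set S := [set mf i | i in 'I_r]%SET.
have cS : #|S| = r by rewrite card_imset ?card_ord //; exact: maxrankfun_inj.
exists [ffun i => enum_val (cast_ord (esym cS) i)]; split.
  apply/forallP => i; apply/forallP => j; apply/implyP => ij; rewrite !ffunE.
  have x0 : 'I_p := enum_val (cast_ord (esym cS) i).
  rewrite !(enum_val_nth x0).
  have tr : transitive (relpre (@nat_of_ord p) ltn) by move=> x y z /=; apply: ltn_trans.
  have := @sorted_ltn_nth _ (relpre (@nat_of_ord p) ltn) tr x0 (enum S) (@enum_sorted p S)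
    (cast_ord (esym cS) i) (cast_ord (esym cS) j).
  by apply; rewrite ?inE -?cardE ?ltn_ord.
apply/eqP; rewrite eqn_leq rank_leq_row /=.
have fr := maxrowsub_free M; rewrite /row_free in fr.
apply: (@leq_trans (\rank (rowsub mf M))); first by rewrite (eqP fr).
apply: mxrankS; apply/row_subP => i.
rewrite row_rowsub.
have iS : mf i \in S by apply/imsetP; exists i.
rewrite -(enum_rankK_in iS iS).
set j := enum_rank_in iS (mf i).
have -> : enum_val j = [ffun i => enum_val (cast_ord (esym cS) i)] (cast_ord cS j).
  by rewrite ffunE; congr enum_val; apply: val_inj.
by rewrite -row_rowsub row_sub.
Qed.

Lemma minor_nz (F : fieldType) d (M : 'M[F]_d) k : \rank M = k ->
  exists f : {ffun 'I_k -> 'I_d}, exists g : {ffun 'I_k -> 'I_d},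
   [/\ incr_index f, incr_index g & \det (mxsub f g M) != 0].
Proof.
move=> rM; have [f [incf rf]] := @sel_rows _ _ _ M k rM.
have rN : \rank (rowsub f M)^T = k by rewrite mxrank_tr.
have [g [incg rg]] := @sel_rows _ _ _ _ k rN.
exists f, g; split => //.
have -> : mxsub f g M = (rowsub g (rowsub f M)^T)^T.
  by apply/matrixP => i j; rewrite !mxE.
rewrite det_tr -unitfE -unitmxE -row_free_unit /row_free rg.
by [].
Qed.

Section Th.
Variable R : realType.

Lemma le_bigmax_seq (T : eqType) (r : seq T) (F : T -> R) x : x \in r ->
  F x <= \big[Num.max/0]_(y <- r) F y.
Proof.
elim: r => [//|y r IH]; rewrite inE big_cons le_max => /orP[/eqP->|/IH->];
  by rewrite ?lexx ?orbT.
Qed.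

Lemma ge_bigmin_seq (r : seq R) h x : x \in r ->
  \big[Num.min/h]_(y <- r) y <= x.
Proof.
elim: r => [//|y r IH]; rewrite inE big_cons ge_min => /orP[/eqP->|/IH->];
  by rewrite ?lexx ?orbT.
Qed.

Lemma wnorm_pos k d (w : {ffun {ffun 'I_k -> 'I_d} * {ffun 'I_k -> 'I_d} -> R}) :
  (0 < wnorm w) <-> exists p, w p != 0.
Proof.
split.
  move=> h; apply: contrapT => hn.
  have : wnorm w = 0.
    rewrite /wnorm; apply: (big_ind (fun x => x = 0)) => //.
      by move=> x y -> ->; rewrite maxxx.
    move=> p _; apply/normr0P; apply/negPn/negP => hp; apply: hn; by exists p.
  by move=> e; rewrite e ltxx in h.
case=> p hp; rewrite /wnorm; apply: (lt_le_trans _ (le_bigmax_seq _ _ (fun q => `|w q|) _ (mem_index_enum p))).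
by rewrite normr_gt0.
Qed.

Lemma Theta_pos m d k (A : mtuple R m d) : (1 <= m)%N ->
  (0 < Theta k A) <-> forall a b, 0 < wnorm (wedge k (A ord0 a *m A ord0 b)).
Proof.
move=> m1; rewrite /Theta.
set s := [seq _ | a <- enum 'I_m, b <- enum 'I_m].
have mems a b : wnorm (wedge k (A ord0 a *m A ord0 b)) \in s.
  by apply: (allpairs_f (fun a b => wnorm (wedge k (A ord0 a *m A ord0 b)))); rewrite mem_enum.
split.
  by move=> h a b; apply: (lt_le_trans h); apply: ge_bigmin_seq.
move=> h; rewrite big_seq_cond; apply: (big_ind (fun x => 0 < x)).
- case E : s => [|x s'] /=.
    by move: (mems (Ordinal m1) (Ordinal m1)); rewrite E.
  have : x \in s by rewrite E inE eqxx.
  by case/allpairsP => [[a b] [_ _ ->]]; apply: h.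
- by move=> x y hx hy; rewrite lt_min hx hy.
- move=> x /andP[/allpairsP [[a b] [_ _ ->]] _]; exact: h.
Qed.
End Th.

Lemma cont_proj (T : topologicalType) p q (i:'I_p) (j:'I_q) : continuous (fun M : 'M[T]_(p,q) => M i j).
Proof.
move=> M Q /= HQ.
exists (fun i' j' => if (i'==i)&&(j'==j) then Q else setT).
  move=> i' j'; case: ifP => [/andP[/eqP-> /eqP->]//|_]; exact: filterT.
by move=> N /(_ i j); rewrite !eqxx.
Qed.

Section Cont.
Variables (R : realType) (m d : nat).
Local Notation T := (mtuple R m d).

Lemma cproj a i j : continuous (fun A : T => A ord0 a i j).
Proof.
move=> A; apply: (@continuous_comp _ _ _ (fun A : T => A ord0 a) (fun M : 'M[R]_d => M i j)).
  exact: cont_proj.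
exact: cont_proj.
Qed.

Lemma cmul (f g : T -> R) : continuous f -> continuous g -> continuous (fun A => f A * g A).
Proof. move=> hf hg A; exact: (cvgM (hf A) (hg A)). Qed.

Lemma cadd (f g : T -> R) : continuous f -> continuous g -> continuous (fun A => f A + g A).
Proof. move=> hf hg A; exact: (cvgD (hf A) (hg A)). Qed.

Lemma csum (I : Type) (r : seq I) (F : I -> T -> R) :
  (forall i, continuous (F i)) -> continuous (fun A => \sum_(i <- r) F i A).
Proof.
move=> hF; elim: r => [|x r IH].
  have -> : (fun A : T => \sum_(i <- [::]) F i A) = fun=> 0.
    by apply: funext => A; rewrite big_nil.
  exact: cst_continuous.
have -> : (fun A : T => \sum_(i <- x :: r) F i A) = F x + (fun A => \sum_(i <- r) F i A).
  by apply: funext => A; rewrite big_cons.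
exact: cadd.
Qed.

Lemma cprod (I : Type) (r : seq I) (F : I -> T -> R) :
  (forall i, continuous (F i)) -> continuous (fun A => \prod_(i <- r) F i A).
Proof.
move=> hF; elim: r => [|x r IH].
  have -> : (fun A : T => \prod_(i <- [::]) F i A) = fun=> 1.
    by apply: funext => A; rewrite big_nil.
  exact: cst_continuous.
have -> : (fun A : T => \prod_(i <- x :: r) F i A) = F x \* (fun A => \prod_(i <- r) F i A).
  by apply: funext => A; rewrite big_cons.
exact: cmul.
Qed.

Lemma cdet n (M : T -> 'M[R]_n) : (forall i j, continuous (fun A => M A i j)) ->
  continuous (fun A => \det (M A)).
Proof.
move=> hM; rewrite /determinant; apply: csum => s; apply: cmul.
  exact: cst_continuous.
by apply: cprod => i; exact: hM.
Qed.

Lemma cphi k a b p : continuous (fun A : T => wedge k (A ord0 a *m A ord0 b) p).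
Proof.
have -> : (fun A : T => wedge k (A ord0 a *m A ord0 b) p) =
  fun A => if incr_index p.1 && incr_index p.2 then
    \det (mxsub p.1 p.2 (A ord0 a *m A ord0 b)) else 0.
  by apply: funext => A; rewrite ffunE.
case: (incr_index p.1 && incr_index p.2); last exact: cst_continuous.
apply: cdet => i j.
have -> : (fun A : T => mxsub p.1 p.2 (A ord0 a *m A ord0 b) i j) =
  fun A => \sum_(l < d) A ord0 a (p.1 i) l * A ord0 b l (p.2 j).
  by apply: funext => A; rewrite !mxE.
apply: csum => l; apply: cmul; exact: cproj.
Qed.
End Cont.

Section X. Variables (R : realType) (m d : nat).
Lemma ball_T (A B : mtuple R m d) e : 0 < e ->
  (forall j i l, `|A ord0 j i l - B ord0 j i l| < e) -> ball A e B.
Proof.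
move=> e0 h; split=> // i0 j; split=> // i l.
rewrite (ord1 i0); exact: h.
Qed.

End X.

Lemma pick_t (R : realType) (p : {poly R}) (del : R) : p != 0 -> 0 < del ->
  exists t, [/\ 0 < t, t <= del & p.[t] != 0].
Proof.
move=> p0 d0.
pose rs := [seq del / (i.+1)%:R | i <- iota 0 (size p)].
have : ~~ all (root p) rs.
  apply/negP => hall.
  have hu : uniq rs.
    rewrite map_inj_uniq ?iota_uniq // => i j.
    move/(mulfI (lt0r_neq0 d0))/invr_inj/eqP.
    by rewrite eqr_nat eqSS => /eqP.
  by have := max_poly_roots p0 hall hu; rewrite size_map size_iota ltnn.
case/allPn => t /mapP [i _ ->] hr; exists (del / i.+1%:R); split => //.
- by rewrite divr_gt0 // ltr0n.
- by rewrite ler_pdivrMr ?ltr0n // -{1}(mulr1 del) ler_pM2l // ler1n.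
Qed.

Definition good (R : realType) m d k (A : mtuple R m d) (a b : 'I_m) :=
  exists p, wedge k (A ord0 a *m A ord0 b) p != 0.

Lemma le_sum2 (R : realType) n (F : 'I_n -> 'I_n -> R) i l :
  (forall i l, 0 <= F i l) -> F i l <= \sum_i \sum_l F i l.
Proof.
move=> hF; rewrite (bigD1 i) //= (bigD1 l) //= -addrA lerDl.
by rewrite addr_ge0 // ?sumr_ge0 // => i' _; rewrite sumr_ge0.
Qed.

Section Step.
Variables (R : realType) (m d k : nat).
Local Notation T := (mtuple R m d).

Lemma eval_polyC (t : R) n (M : 'M[R]_n) : map_mx (horner_eval t) (map_mx polyC M) = M.
Proof. by rewrite -map_mx_comp; apply: map_mx_id => x /=; rewrite horner_evalE hornerC. Qed.

Lemma step (A : T) (O : set T) a b : open O -> O A -> @Ck R m d k A ->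
  exists A', [/\ O A', @Ck R m d k A' & good R m d k A' a b].
Proof.
move=> oO OA CA.
have : nbhs A O by apply: open_nbhs_nbhs; split.
move/nbhs_ballP => [e /= e0 hball].
have [W uW rW] := @LA1 _ _ (A ord0 a) (A ord0 b) (etrans (CA b) (esym (CA a))).
set D := W - 1%:M.
pose At (t : R) : T := \row_j (if j == a then A ord0 j *m (1%:M + t *: D) else A ord0 j).
pose Vp : 'M[{poly R}]_d := 1%:M + 'X *: map_mx polyC D.
pose Bp j := if j == a then map_mx polyC (A ord0 j) *m Vp else map_mx polyC (A ord0 j).
have evV t : map_mx (horner_eval t) Vp = 1%:M + t *: D.
  by rewrite map_mxD map_mx1 map_mxZ eval_polyC /= horner_evalE hornerX.
have evB t j : map_mx (horner_eval t) (Bp j) = At t ord0 j.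
  by rewrite /Bp mxE; case: (j == a); rewrite ?map_mxM ?evV eval_polyC.
have rk1 : \rank (At 1 ord0 a *m At 1 ord0 b) = k.
  have e1 : 1%:M + 1 *: D = W by rewrite scale1r /D addrC subrK.
  rewrite !mxE eqxx e1.
  have [eba|nba] := eqVneq b a.
    rewrite eba mulmxA mxrankMfree ?row_free_unit //.
    by rewrite -(CA a) -rW eba.
  by rewrite rW CA.
have [f [g [incf incg hdet]]] := @minor_nz _ _ _ k rk1.
pose P := \det (mxsub f g (Bp a *m Bp b)).
have evP t : P.[t] = \det (mxsub f g (At t ord0 a *m At t ord0 b)).
  by rewrite -horner_evalE -det_map_mx map_mxsub map_mxM !evB.
pose Q := \det Vp.
have evQ t : Q.[t] = \det (1%:M + t *: D).
  by rewrite -horner_evalE -det_map_mx evV.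
have P0 : P != 0.
  by apply: contraNneq hdet => P0; rewrite -evP P0 horner0.
have Q0 : Q != 0.
  by apply/eqP => Q0; move: (evQ 0); rewrite Q0 horner0 scale0r addr0 det1 => /eqP; rewrite eq_sym oner_eq0.
pose C := 1 + \sum_(i < d) \sum_(l < d) `|(A ord0 a *m D) i l|.
have C0 : 0 < C.
  by rewrite /C ltr_pwDl // sumr_ge0 // => i _; rewrite sumr_ge0.
have [t [t0 tle ht]] := @pick_t _ _ _ (mulf_neq0 P0 Q0) (divr_gt0 e0 C0).
rewrite hornerM mulf_eq0 negb_or in ht; case/andP: ht => hP hQ.
exists (At t); split.
- apply: hball; apply: ball_T => // j i l; rewrite mxE.
  case: eqP => [->|_]; last by rewrite subrr normr0.
  rewrite mulmxDr mulmx1 mxE opprD addrA subrr add0r normrN -scalemxAr mxE normrM (gtr0_norm t0).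
  apply: (le_lt_trans (ler_wpM2r (normr_ge0 _) tle)).
  rewrite mulrAC ltr_pdivrMr // ltr_pM2l // /C.
  have := @le_sum2 _ _ (fun i l => `|(A ord0 a *m D) i l|) i l (fun _ _ => normr_ge0 _).
  move=> /= h; apply: (le_lt_trans h); by rewrite ltrDr ltr01.
- move=> j; rewrite mxE; case: eqP => [->|_]; last exact: CA.
  by rewrite mxrankMfree ?CA // row_free_unit unitmxE unitfE -evQ.
- by exists (f, g); rewrite ffunE /= incf incg /= -evP.
Qed.
End Step.

Section Main.
Variables (R : realType) (m d k : nat).
Local Notation T := (mtuple R m d).

Lemma nbhs_good (A : T) a b : good R m d k A a b -> nbhs A [set B : T | good R m d k B a b].
Proof.
case=> p hp.
have hn : nbhs (wedge k (A ord0 a *m A ord0 b) p) [set y : R | y != 0].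
  apply: (@open_nbhs_nbhs R); split; last exact: hp.
  by move: (@open_neq R 0).
have h := @cphi R m d k a b p A; have := h _ hn.
move=> h2; apply: (@filterS _ (nbhs A) _ _ _ _ h2) => B hB; by exists p.
Qed.

Lemma open_good a b : open [set A : T | good R m d k A a b].
Proof. by rewrite openE => A /nbhs_good. Qed.

Lemma open_allgood : open [set A : T | forall a b, good R m d k A a b].
Proof.
rewrite openE => A hA; rewrite /interior /=.
apply: (@filter_forall T 'I_m (fun a B => forall b, good R m d k B a b) (nbhs A) _) => a.
apply: (@filter_forall T 'I_m (fun b B => good R m d k B a b) (nbhs A) _) => b.
exact: nbhs_good (hA a b).
Qed.

Lemma multi (L : seq ('I_m * 'I_m)) (A : T) (O : set T) :
  open O -> O A -> @Ck R m d k A ->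
  exists A', [/\ O A', @Ck R m d k A' & forall p, p \in L -> good R m d k A' p.1 p.2].
Proof.
elim: L A O => [|[a b] L IH] A O oO OA CA.
  by exists A; split.
have [A1 [HO1 C1 g1]] := @step R m d k A O a b oO OA CA.
have [A2 [HO2 C2 g2]] := IH A1 (O `&` [set B | good R m d k B a b])
  (openI oO (open_good a b)) (conj HO1 g1) C1.
exists A2; split => //; first by case: HO2.
move=> p; rewrite inE => /orP [/eqP -> | pL]; [by case: HO2 | exact: g2].
Qed.

Lemma UkE : (1 <= m)%N -> forall A : T,
  @Uk R m d k A <-> (@Ck R m d k A /\ forall a b, good R m d k A a b).
Proof.
move=> m1 A; rewrite /Uk /=; split.
  case=> CA hT; split => // a b; apply/wnorm_pos; exact: (proj1 (@Theta_pos R m d k A m1) hT).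
case=> CA hg; split => //; apply/(@Theta_pos R m d k A m1) => a b; apply/wnorm_pos; exact: hg.
Qed.
End Main.

Theorem proposition4p3 (R : realType) (m d k : nat) :
  (1 <= m)%N -> (1 <= d)%N -> (1 <= k)%N -> (k <= d)%N ->
  rel_open (@Ck R m d k) (@Uk R m d k) /\ rel_dense (@Ck R m d k) (@Uk R m d k).
Proof.
move=> m1 _ _ _; split.
  exists [set A | forall a b, good R m d k A a b]; split; first exact: open_allgood.
  apply/seteqP; split => A /=.
    by case/(@UkE R m d k m1 A) => CA hg; split.
  by case=> hg CA; apply/(@UkE R m d k m1 A).
split; first by move=> A [].
move=> O oO [A [OA CA]].
have [A' [OA' CA' hg]] := @multi R m d k (index_enum ('I_m * 'I_m)%type) A O oO OA CA.
exists A'; split => //; apply/(@UkE R m d k m1 A'); split => // a b.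
by apply: (hg (a, b)); rewrite mem_index_enum.
Qed.
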